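(* Let $G$ be a finite simple graph with at least $66$ vertices and $G\in\mathcal{F}_3$. Then $crx_3(G)>4$; that is, no edge-colouring of $G$ with at most $4$ colours has the property that any three vertices of $G$ lie on a common rainbow cycle.
   Context: An edge-coloured cycle is rainbow if all its edges have distinct colours. For $k\ge 1$, $\mathcal{F}_k$ is the family of graphs in which any $k$ vertices lie on a common cycle. For $G\in\mathcal{F}_k$, a $k$-rainbow cycle colouring of $G$ is an edge-colouring such that any $k$ vertices of $G$ lie on a common rainbow cycle; $crx_k(G)$ is the minimum number of colours in a $k$-rainbow cycle colouring of $G$. *)

(* Defs.v *)
From mathcomp Require Import all_boot.
Set Implicit Arguments. Unset Strict Implicit. Unset Printing Implicit Defensive.

Definition simple_graph (T : finType) (e : rel T) : Prop :=
  irreflexive e /\ symmetric e.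

Definition graph_cycle (T : finType) (e : rel T) (c : seq T) : bool :=
  [&& 2 < size c, uniq c & cycle e c].

Definition cycle_edges (T : finType) (c : seq T) : seq (T * T) := zip c (rot 1 c).

(* An edge-colouring with colours in 'I_n: a colour for every edge, independent
   of the orientation of the edge (values on non-edges are irrelevant). *)
Definition edge_colouring (T : finType) (e : rel T) (n : nat) (col : T -> T -> 'I_n) : Prop :=
  forall x y, e x y -> col x y = col y x.

Definition rainbow (T : finType) (n : nat) (col : T -> T -> 'I_n) (c : seq T) : bool :=
  uniq [seq col p.1 p.2 | p <- cycle_edges c].

Definition in_F (T : finType) (e : rel T) (k : nat) : Prop :=
  forall S : {set T}, #|S| = k -> exists c, graph_cycle e c /\ {subset S <= c}.

Definition rainbow_cycle_colouring (T : finType) (e : rel T) (k n : nat)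
    (col : T -> T -> 'I_n) : Prop :=
  edge_colouring e col /\
  forall S : {set T}, #|S| = k ->
    exists c, [/\ graph_cycle e c, rainbow col c & {subset S <= c}].

(* Main.v *)
Require Import Defs.
From mathcomp Require Import all_boot zify.
Set Implicit Arguments. Unset Strict Implicit. Unset Printing Implicit Defensive.
Lemma pig (C T : finType) (f : T -> C) (K : {set C}) (A : {set T}) :
  {in A, forall y, f y \in K} ->
  #|A| = \sum_(i in K) #|[set y in A | f y == i]|.
Proof.
move=> HA.
rewrite -sum1_card (partition_big f (mem K)) //=.
apply: eq_bigr => i _; rewrite -sum1_card; apply: eq_bigl => y; by rewrite inE.
Qed.

Fixpoint rf k := if k is k'.+1 then k * (rf k').-1 + 2 else 2.

Lemma ramsey (C T : finType) (c : T -> T -> C) k : forall (K : {set C}) (A : {set T}),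
  #|K| = k -> (forall x y, x \in A -> y \in A -> x != y -> c x y \in K) ->
  rf k <= #|A| ->
  exists x y z i, [/\ [&& x != y, x != z & y != z], c x y = i, c x z = i & c y z = i].
Proof.
elim: k => [|k IH] K A HK HA Hc.
  have /card_gt1P [x [y [Hx Hy Hxy]]] : 1 < #|A| by [].
  have := HA x y Hx Hy Hxy.
  by move/eqP: HK; rewrite cards_eq0 => /eqP ->; rewrite inE.
have [a Ha] : exists a, a \in A.
  by apply/card_gt0P; apply: leq_trans Hc; rewrite /= addn2.
set A' := A :\ a.
have HA' : #|A'| = #|A|.-1 by rewrite (cardsD1 a A) Ha.
pose B i := [set y in A' | c a y == i].
have [i Hi HB] : exists2 i, i \in K & rf k <= #|B i|.
  case: (boolP [exists i in K, rf k <= #|B i|]) => [/exists_inP //|/exists_inPn Hn]; exfalso.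
  have : #|A'| <= \sum_(i in K) (rf k).-1.
    rewrite (@pig _ _ (c a) K); last first.
      move=> y; rewrite !inE => /andP[Hya Hy]; apply: HA => //; by rewrite eq_sym.
    apply: leq_sum => i Hi; have := Hn i Hi; rewrite -ltnNge.
    by case: (rf k) => // n; rewrite ltnS.
  rewrite sum_nat_const HK HA' => H; move: Hc => /=; lia.
case: (boolP [exists y in B i, exists z in B i, (y != z) && (c y z == i)]).
  case/exists_inP => y Hy /exists_inP [z Hz /andP [Hyz /eqP Eyz]].
  move: Hy Hz; rewrite !inE => /andP[/andP [Hya _] /eqP Ey] /andP[/andP [Hza _] /eqP Ez].
  exists a, y, z, i; split => //.
  by rewrite eq_sym Hya eq_sym Hza Hyz.
move/exists_inPn => Hn.
apply: (IH (K :\ i) (B i)) => //.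
  by move: HK; rewrite (cardsD1 i K) Hi => -[].
move=> x y Hx Hy Hxy.
have := Hn x Hx; move/exists_inPn/(_ y Hy); rewrite Hxy /= => Hne.
move: Hx Hy; rewrite !inE => /andP[/andP [_ Hx] _] /andP[/andP [_ Hy] _].
by rewrite Hne HA.
Qed.

Definition pc (T : finType) (e : rel T) (col : T -> T -> 'I_4) (u v : T) : 'I_4 :=
  if e u v then col u v else ord0.

Lemma pc_sym (T : finType) (e : rel T) col : simple_graph e -> edge_colouring e col ->
  forall u v, pc e col u v = pc e col v u.
Proof.
move=> [_ Hs] Hc u v; rewrite /pc (Hs u v); case: ifP => // /Hc //.
Qed.

Lemma pc_edge (T : finType) (e : rel T) col u v : e u v -> col u v = pc e col u v.
Proof. by rewrite /pc => ->. Qed.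

Lemma tri_cycle (T : finType) (e : rel T) (col : T -> T -> 'I_4) :
  simple_graph e -> edge_colouring e col ->
  forall cy x y z i, graph_cycle e cy -> rainbow col cy ->
  x \in cy -> y \in cy -> z \in cy -> x != y -> x != z -> y != z ->
  pc e col x y = i -> pc e col x z = i -> pc e col y z = i -> False.
Proof.
move=> Hsg Hcol cy x y z i /and3P[Hs Hu Hc] Hr Hx Hy Hz Hxy Hxz Hyz E1 E2 E3.
have Hsz : size cy <= 4.
  move: Hr; rewrite /rainbow => /card_uniqP.
  rewrite size_map /cycle_edges size_zip size_rot minnn => <-.
  by apply: leq_trans (max_card _) _; rewrite card_ord.
have E1' := E1; have E2' := E2; have E3' := E3.
rewrite pc_sym // in E1'; rewrite pc_sym // in E2'; rewrite pc_sym // in E3'.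
move: Hx Hy Hz Hxy Hxz Hyz E1 E2 E3 E1' E2' E3'.
case: cy Hs Hu Hc Hr Hsz => [|a [|b [|d [|g [|h s]]]]] //= _ Hu.
- case/and4P => Eab Ebd Eda _.
  rewrite /rainbow /cycle_edges /=.
  rewrite (pc_edge col Eab) (pc_edge col Ebd) (pc_edge col Eda).
  move=> Hr _; rewrite !inE.
  case/or3P=>/eqP->; case/or3P=>/eqP->; case/or3P=>/eqP->; rewrite ?eqxx // => _ _ _ E1 E2 E3 E4 E5 E6;
  move: Hr; rewrite ?E1 ?E2 ?E3 ?E4 ?E5 ?E6 /= !inE ?eqxx ?orbT /= ?andbF //.
case/and5P => Eab Ebd Edg Ega _.
rewrite /rainbow /cycle_edges /=.
rewrite (pc_edge col Eab) (pc_edge col Ebd) (pc_edge col Edg) (pc_edge col Ega).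
move=> Hr _; rewrite !inE.
case/or4P=>/eqP->; case/or4P=>/eqP->; case/or4P=>/eqP->; rewrite ?eqxx // => _ _ _ E1 E2 E3 E4 E5 E6;
  move: Hr; rewrite ?E1 ?E2 ?E3 ?E4 ?E5 ?E6 /= !inE ?eqxx ?orbT /= ?andbF //.
Qed.

Theorem theorem7 (T : finType) (e : rel T) :
  simple_graph e -> 66 <= #|T| -> in_F e 3 ->
  ~ exists col : T -> T -> 'I_4, rainbow_cycle_colouring e 3 col.
Proof.
move=> Hsg Hn _ [col [Hcol Hrb]].
have HK : #|[set: 'I_4]| = 4 by rewrite cardsT card_ord.
have HA : rf 4 <= #|[set: T]| by rewrite cardsT.
have [x [y [z [i [/and3P[Hxy Hxz Hyz] E1 E2 E3]]]]] :=
  @ramsey _ _ (pc e col) 4 setT setT HK (fun _ _ _ _ _ => in_setT _) HA.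
have HS : #|[set x; y; z]| = 3.
  rewrite -setUA cardsU1 cards2 Hyz !inE negb_or Hxy Hxz //.
have [cy [Hgc Hrain Hsub]] := Hrb _ HS.
apply: (tri_cycle Hsg Hcol Hgc Hrain _ _ _ Hxy Hxz Hyz E1 E2 E3);
  apply: Hsub; by rewrite !inE eqxx ?orbT.
Qed.
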